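(* For $t\in[0,1]$ let $f_t\in\mathrm{Bir}(\mathbb{P}^2_{\mathbb{C}})$ be $f_t\colon[x_0:x_1:x_2]\dashrightarrow[x_0^2:x_0x_1:x_0x_2+t(1-t)x_1^2]$. Let $\sigma\colon[-1,1]\to\mathrm{PSU}(3)$ be a continuous surjective map, regard $\mathrm{PSU}(3)\subset\mathrm{PGL}_3(\mathbb{C})=\mathrm{Aut}(\mathbb{P}^2_{\mathbb{C}})\subset\mathrm{Bir}(\mathbb{P}^2_{\mathbb{C}})$, let $\hat\sigma\colon(0,1]\to\mathrm{PSU}(3)$, $\hat\sigma(t)=\sigma(\sin(1))^{-1}\sigma(\sin(1/t))$, and $\rho\colon(0,1]\to\mathrm{Bir}(\mathbb{P}^2_{\mathbb{C}})$, $\rho(t)=\hat\sigma(t)\circ f_t\circ\hat\sigma(t)^{-1}$. Then $\rho$ extends to a continuous map $\hat\rho\colon[0,1]\to\mathrm{Bir}(\mathbb{P}^2_{\mathbb{C}})$ with $\hat\rho(0)=\mathrm{id}$. Moreover, the map $H\colon[0,1]\times[0,1]\to\mathrm{Bir}(\mathbb{P}^2_{\mathbb{C}})$ given by $H(s,t)=\hat\rho(t)$ for $t\geq s$ and $H(s,t)=\hat\sigma(s)\circ f_t\circ\hat\sigma(s)^{-1}$ for $t<s$ is continuous; in particular $\hat\rho$ is homotopic to the map $t\mapsto f_t$.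
   Context: All topologies on $\mathrm{Bir}(\mathbb{P}^2_{\mathbb{C}})$ are the Euclidean topology: for $d\geq1$, $W_d(\mathbb{C})$ is the projective space of classes of non-zero triples of degree-$d$ homogeneous polynomials in $\mathbb{C}[x_0,x_1,x_2]$ modulo scalars with its Euclidean topology; $H_d(\mathbb{C})\subset W_d(\mathbb{C})$ the subset defining birational maps; the set $\mathrm{Bir}(\mathbb{P}^2_{\mathbb{C}})_{\leq d}$ of maps of degree $\leq d$ gets the quotient topology via the natural surjection $H_d(\mathbb{C})\to\mathrm{Bir}(\mathbb{P}^2_{\mathbb{C}})_{\leq d}$, and $\mathrm{Bir}(\mathbb{P}^2_{\mathbb{C}})$ the inductive limit topology. *)

(* Defs.v *)
From HB Require Import structures.
From mathcomp Require Import all_boot all_order all_algebra.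
From mathcomp Require Import complex.
From mathcomp Require Import reals trigo.
Set Implicit Arguments. Unset Strict Implicit. Unset Printing Implicit Defensive.
Import Order.TTheory GRing.Theory Num.Theory.
Local Open Scope ring_scope.

Section BirDefs.
Variable R : realType.
Local Notation C := (R[i]).

(* Monomials of degree d in x0,x1,x2: pairs (a,b) = exponents of x1,x2,
   the exponent of x0 being d - a - b. *)
Definition mon (d : nat) : finType := {ab : 'I_d.+1 * 'I_d.+1 | (ab.1 + ab.2 <= d)%N}.

Definition trip (d : nat) := 'I_3 -> mon d -> C.

(* Representatives of elements of Bir(P^2): a degree d and a triple of degree d. *)
Definition BirRep := {d : nat & trip d}.

Definition pt := 'I_3 -> C.

Definition evpoly (d : nat) (c : mon d -> C) (x : pt) : C :=
  \sum_(m : mon d)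
     c m * x ord0 ^+ (d - (val (val m).1 + val (val m).2))
         * x (lift ord0 ord0) ^+ val (val m).1
         * x (lift ord0 (lift ord0 ord0)) ^+ val (val m).2.

Definition ev (F : BirRep) (x : pt) : pt := fun i => evpoly (projT2 F i) x.

Definition nonzero_pt (y : pt) := exists i, y i != 0.

Definition same_map (F G : BirRep) : Prop :=
  forall x i j, ev F x i * ev G x j = ev F x j * ev G x i.

(* G o F = h * id for a nonzero polynomial h (as polynomial identities,
   tested pointwise over the infinite field C) *)
Definition comp_is_id (G F : BirRep) : Prop :=
  (forall x i j, ev G (ev F x) i * x j = ev G (ev F x) j * x i) /\
  (exists x, nonzero_pt (ev G (ev F x))).

Definition birational (F : BirRep) : Prop :=
  (exists i m, projT2 F i m != 0) /\
  exists G : BirRep, comp_is_id G F /\ comp_is_id F G.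

Definition vopen (I : finType) (O : (I -> C) -> Prop) : Prop :=
  forall v, O v -> exists e : C, 0 < e /\
    forall w, (forall i, `|w i - v i| < e) -> O w.

Definition coords (d : nat) (F : trip d) : 'I_3 * mon d -> C :=
  fun p => F p.1 p.2.

(* Open subsets of Bir(P^2) (inductive limit of quotient topologies),
   given as saturated predicates on birational representatives. *)
Definition bir_open (U : BirRep -> Prop) : Prop :=
  (forall F G, birational F -> birational G -> same_map F G -> U F -> U G) /\
  forall d : nat, exists O : ('I_3 * mon d -> C) -> Prop, vopen O /\
    forall F : trip d, birational (existT _ d F) ->
      (U (existT _ d F) <-> O (coords F)).

Definition bir_cont_on (a b : R) (g : R -> BirRep) : Prop :=
  (forall t, a <= t <= b -> birational (g t)) /\
  forall U, bir_open U -> forall t, a <= t <= b -> U (g t) ->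
    exists e : R, 0 < e /\ forall t', a <= t' <= b -> `|t' - t| < e -> U (g t').

Definition bir_cont2 (g : R -> R -> BirRep) : Prop :=
  (forall s t, 0 <= s <= 1 -> 0 <= t <= 1 -> birational (g s t)) /\
  forall U, bir_open U -> forall s t, 0 <= s <= 1 -> 0 <= t <= 1 -> U (g s t) ->
    exists e : R, 0 < e /\ forall s' t', 0 <= s' <= 1 -> 0 <= t' <= 1 ->
      `|s' - s| < e -> `|t' - t| < e -> U (g s' t').

Definition mcoords (A : 'M[C]_3) : 'I_3 * 'I_3 -> C := fun p => A p.1 p.2.

(* open subsets of the projective space P(C^I): C^*-invariant sets of
   nonzero vectors that are open in C^I *)
Definition proj_open (I : finType) (S : (I -> C) -> Prop) : Prop :=
  (forall v, S v -> exists i, v i != 0) /\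
  (forall v (c : C), c != 0 -> S v -> S (fun i => c * v i)) /\ vopen S.

Definition conjtr (U : 'M[C]_3) : 'M[C]_3 := map_mx Num.conj U^T.
Definition SU3 (U : 'M[C]_3) : Prop := U *m conjtr U = 1%:M /\ \det U = 1.
(* A represents an element of PSU(3) ⊂ PGL_3(C) *)
Definition is_psu (A : 'M[C]_3) : Prop :=
  exists (c : C) (U : 'M[C]_3), c != 0 /\ SU3 U /\ A = c *: U.

(* sigma : [-1,1] -> PSU(3), continuous (PSU(3) with the topology induced from
   PGL_3(C) ⊂ P^8) and surjective, given by representative matrices *)
Definition psu_path (sigma : R -> 'M[C]_3) : Prop :=
  (forall s, -1 <= s <= 1 -> is_psu (sigma s)) /\
  (forall S, proj_open S -> forall s, -1 <= s <= 1 -> S (mcoords (sigma s)) ->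
     exists e : R, 0 < e /\ forall s', -1 <= s' <= 1 -> `|s' - s| < e ->
       S (mcoords (sigma s'))) /\
  (forall U, SU3 U -> exists s, -1 <= s <= 1 /\ exists c : C, c != 0 /\ sigma s = c *: U).

Definition lin (A : 'M[C]_3) (x : pt) : pt := fun i => \sum_j A i j * x j.

Definition fmap (t : R) (x : pt) : pt :=
  fun i => match val i with
           | 0 => x ord0 ^+ 2
           | 1 => x ord0 * x (lift ord0 ord0)
           | _ => x ord0 * x (lift ord0 (lift ord0 ord0))
                  + (real_complex R (t * (1 - t))) * x (lift ord0 ord0) ^+ 2
           end.

Definition sighat (sigma : R -> 'M[C]_3) (t : R) : 'M[C]_3 :=
  invmx (sigma (sin 1)) *m sigma (sin (t^-1)).

Definition conjf (A : 'M[C]_3) (t : R) (x : pt) : pt :=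
  lin A (fmap t (lin (invmx A) x)).

Definition represents (F : BirRep) (phi : pt -> pt) : Prop :=
  forall x, ev F x = phi x.

Definition same_as (F : BirRep) (phi : pt -> pt) : Prop :=
  forall x i j, ev F x i * phi x j = ev F x j * phi x i.

End BirDefs.

(* Main.v *)
From Pilot Require Import Defs.
From HB Require Import structures.
From mathcomp Require Import all_boot all_order all_algebra.
From mathcomp Require Import complex.
From mathcomp Require Import reals trigo.
From mathcomp Require Import ring lra.
From mathcomp Require Import classical_sets topology normedtype.
Import numFieldNormedType.Exports.
Import Pilot.Defs.
From mathcomp Require boolp.
Import Order.TTheory GRing.Theory Num.Theory.
Local Open Scope ring_scope.
Set Implicit Arguments. Unset Strict Implicit. Unset Printing Implicit Defensive.

Section Nm.
Variable R : realType.
Local Notation C := (R[i]).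
Local Notation rc := (real_complex R).

Definition nm (z : C) : R := complex.Re `|z|.

Lemma normE (z : C) : `|z| = rc (nm z).
Proof. by rewrite /nm normc_def. Qed.

Lemma nm_ge0 z : 0 <= nm z.
Proof. by have := normr_ge0 z; rewrite normE -[0 : C](rmorph0 (real_complex R)) lecR. Qed.

Lemma nmD x y : nm (x + y) <= nm x + nm y.
Proof. by have := ler_normD x y; rewrite !normE -rmorphD lecR. Qed.

Lemma nmM x y : nm (x * y) = nm x * nm y.
Proof. by apply: (@complexI R); rewrite rmorphM /= -!normE normrM. Qed.

Lemma nmN x : nm (- x) = nm x.
Proof. by apply: (@complexI R); rewrite -!normE normrN. Qed.

Lemma nmB x y : nm (x - y) = nm (y - x).
Proof. by rewrite -nmN opprB. Qed.

Lemma nmJ x : nm (Num.conj x) = nm x.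
Proof. by apply: (@complexI R); rewrite -!normE norm_conjC. Qed.

Lemma nm_eq0 x : (nm x == 0) = (x == 0).
Proof. by rewrite -[x == 0]normr_eq0 normE -[0 : C](rmorph0 (real_complex R)) (inj_eq (@complexI R)). Qed.

Lemma nm_rc (r : R) : nm (rc r) = `|r|.
Proof.
apply: (@complexI R); rewrite -normE normc_def /=.
by rewrite expr0n /= addr0 sqrtr_sqr.
Qed.

Lemma ltC (z : C) (e : R) : (`|z| < rc e) = (nm z < e).
Proof. by rewrite normE ltcR. Qed.

Lemma posC (e : C) : 0 < e -> e = rc (complex.Re e) /\ 0 < complex.Re e.
Proof.
case: e => a b; rewrite ltcE /= => /andP [/eqP hb h].
by subst b.
Qed.

End Nm.

Section Alg.
Variable R : realType.
Local Notation C := (R[i]).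
Local Notation rc := (real_complex R).
Local Notation i1 := (lift ord0 (ord0 : 'I_2)).
Local Notation i2 := (lift ord0 (lift ord0 (ord0 : 'I_1))).

Definition fa (a : C) (x : pt R) : pt R :=
  fun i => match val i with
           | 0 => x ord0 ^+ 2
           | 1 => x ord0 * x (lift ord0 ord0)
           | _ => x ord0 * x (lift ord0 (lift ord0 ord0))
                  + a * x (lift ord0 ord0) ^+ 2
           end.

Lemma fmapE t : fmap t = fa (rc (t * (1 - t))).
Proof. by []. Qed.

Definition monv (d : nat) (m : mon d) (x : pt R) : C :=
  x ord0 ^+ (d - (val (val m).1 + val (val m).2))
         * x (lift ord0 ord0) ^+ val (val m).1
         * x (lift ord0 (lift ord0 ord0)) ^+ val (val m).2.

Lemma evpolyE d (c : mon d -> C) x : evpoly c x = \sum_m c m * monv m x.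
Proof. by apply: eq_bigr => m _; rewrite /monv !mulrA. Qed.

Lemma evpoly_sum d (I : finType) (F : I -> mon d -> C) x :
  evpoly (fun m => \sum_k F k m) x = \sum_k evpoly (F k) x.
Proof.
rewrite evpolyE (eq_bigr (fun m => \sum_k F k m * monv m x)); last first.
  by move=> m _; rewrite mulr_suml.
by rewrite exchange_big; apply: eq_bigr => k _; rewrite evpolyE.
Qed.

Lemma evpolyD d (F G : mon d -> C) x :
  evpoly (fun m => F m + G m) x = evpoly F x + evpoly G x.
Proof. by rewrite !evpolyE -big_split; apply: eq_bigr => m _; rewrite mulrDl. Qed.

Lemma evpolyZ d a (F : mon d -> C) x :
  evpoly (fun m => a * F m) x = a * evpoly F x.
Proof. by rewrite !evpolyE mulr_sumr; apply: eq_bigr => m _; rewrite mulrA. Qed.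

Definition m00 : mon 2 := exist _ (ord0, ord0) isT.

Definition e1 (i j : 'I_3) : nat := ((val i == 1%N) + (val j == 1%N))%N.
Definition e2 (i j : 'I_3) : nat := ((val i == 2%N) + (val j == 2%N))%N.

Definition mono2 (i j : 'I_3) : mon 2 :=
  insubd m00 ((inord (e1 i j), inord (e2 i j)) : 'I_3 * 'I_3).

Lemma ord3P (i : 'I_3) : i = ord0 \/ i = i1 \/ i = i2.
Proof.
case: i => [[|[|[|//]]] h].
- by left; apply: val_inj.
- by right; left; apply: val_inj.
- by right; right; apply: val_inj.
Qed.

Lemma monv_mono2 i j x : monv (mono2 i j) x = x i * x j.
Proof.
have he : (e1 i j < 3)%N /\ (e2 i j < 3)%N /\ (e1 i j + e2 i j <= 2)%N.
  by case: (ord3P i) => [->|[->|->]]; case: (ord3P j) => [->|[->|->]].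
case: he => h1 [h2 h3].
have E : val (mono2 i j) = (inord (e1 i j), inord (e2 i j)).
  by rewrite /mono2 /insubd insubT /= ?inordK.
rewrite /monv E /= !inordK //.
by case: (ord3P i) => [->|[->|->]]; case: (ord3P j) => [->|[->|->]];
  rewrite /e1 /e2 /= ?expr0 ?expr1 ?expr2 ?mul1r ?mulr1 // mulrC.
Qed.

Definition qc (u w : 'I_3 -> C) : mon 2 -> C :=
  fun m => \sum_i \sum_j (if mono2 i j == m then u i * w j else 0).

Lemma evpoly_qc u w x :
  evpoly (qc u w) x = (\sum_i u i * x i) * (\sum_j w j * x j).
Proof.
rewrite /qc evpoly_sum mulr_suml; apply: eq_bigr => i _.
rewrite evpoly_sum mulr_sumr; apply: eq_bigr => j _.
rewrite evpolyE (bigD1 (mono2 i j)) //= eqxx big1 ?addr0.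
  by rewrite monv_mono2 mulrACA.
by move=> m /negbTE hm; rewrite eq_sym hm mul0r.
Qed.


Definition rowf (B : 'M[C]_3) (j : 'I_3) : 'I_3 -> C := fun l => B j l.

Definition Ktrip (A : 'M[C]_3) (a : C) : trip R 2 := fun i m =>
  \sum_k A i k * qc (rowf (conjtr A) ord0) (rowf (conjtr A) k) m
  + a * A i i2 * qc (rowf (conjtr A) i1) (rowf (conjtr A) i1) m.

Definition Krep A a : BirRep R := existT _ 2 (Ktrip A a).

Lemma sum3 (F : 'I_3 -> C) : \sum_k F k = F ord0 + F i1 + F i2.
Proof. by rewrite !big_ord_recl big_ord0 addr0 addrA. Qed.

Lemma evK A a x i : ev (Krep A a) x i = lin A (fa a (lin (conjtr A) x)) i.
Proof.
rewrite /ev /= /Ktrip evpolyD evpoly_sum evpolyZ evpoly_qc.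
rewrite (eq_bigr (fun k => A i k * evpoly (qc (rowf (conjtr A) ord0) (rowf (conjtr A) k)) x)); last first.
  by move=> k _; rewrite evpolyZ.
rewrite /lin sum3 [X in _ = X]sum3 !evpoly_qc /fa /= /rowf.
ring.
Qed.


Lemma lin_ext A (v w : pt R) : v =1 w -> lin A v = lin A w.
Proof. by move=> h; apply: boolp.funext => i; apply: eq_bigr => j _; rewrite h. Qed.

Lemma linZv A c (v : pt R) : lin A (fun i => c * v i) = fun i => c * lin A v i.
Proof.
apply: boolp.funext => i; rewrite /lin mulr_sumr; apply: eq_bigr => j _.
by rewrite mulrCA.
Qed.

Lemma linZm A c (v : pt R) : lin (c *: A) v = fun i => c * lin A v i.
Proof.
apply: boolp.funext => i; rewrite /lin mulr_sumr; apply: eq_bigr => j _.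
by rewrite mxE mulrA.
Qed.

Lemma linM A B (v : pt R) : lin A (lin B v) = lin (A *m B) v.
Proof.
apply: boolp.funext => i; rewrite /lin.
rewrite (eq_bigr (fun j => \sum_k A i j * B j k * v k)); last first.
  by move=> j _; rewrite mulr_sumr; apply: eq_bigr => k _; rewrite mulrA.
rewrite exchange_big; apply: eq_bigr => k _.
by rewrite mxE mulr_suml.
Qed.

Lemma lin_scal r (v : pt R) : lin r%:M v = fun i => r * v i.
Proof.
apply: boolp.funext => i; rewrite /lin (bigD1 i) //= big1 ?addr0.
  by rewrite mxE eqxx mulr1n.
by move=> j /negbTE hj; rewrite mxE eq_sym hj mulr0n mul0r.
Qed.

Lemma lin1 (v : pt R) : lin 1%:M v = v.
Proof. by rewrite lin_scal; apply: boolp.funext => i; rewrite mul1r. Qed.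

Lemma faZ a c (v : pt R) : fa a (fun i => c * v i) = fun i => c ^+ 2 * fa a v i.
Proof.
apply: boolp.funext => i; rewrite /fa.
by case: (ord3P i) => [->|[->|->]]; rewrite /=; ring.
Qed.

Lemma faK a (y : pt R) : fa (- a) (fa a y) = fun i => y ord0 ^+ 3 * y i.
Proof.
apply: boolp.funext => i; rewrite /fa.
by case: (ord3P i) => [->|[->|->]]; rewrite /=; ring.
Qed.

Lemma conjtrM (A B : 'M[C]_3) : conjtr (A *m B) = conjtr B *m conjtr A.
Proof.
apply/matrixP => i j; rewrite !mxE rmorph_sum; apply: eq_bigr => k _.
by rewrite !mxE rmorphM mulrC.
Qed.

Lemma conjtrZ (c : C) (A : 'M[C]_3) : conjtr (c *: A) = Num.conj c *: conjtr A.
Proof. by apply/matrixP => i j; rewrite !mxE rmorphM. Qed.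

Lemma conjtrK (A : 'M[C]_3) : conjtr (conjtr A) = A.
Proof. by apply/matrixP => i j; rewrite !mxE conjCK. Qed.

Lemma conjtr1 : conjtr (1%:M : 'M[C]_3) = 1%:M.
Proof. by apply/matrixP => i j; rewrite !mxE rmorphMn rmorph1 eq_sym. Qed.

Lemma scalZ (a b : C) : a *: (b%:M : 'M[C]_3) = (a * b)%:M.
Proof. by rewrite -[b%:M]scalemx1 scalerA scalemx1. Qed.

Definition good (A : 'M[C]_3) (r : C) :=
  r != 0 /\ A *m conjtr A = r%:M /\ conjtr A *m A = r%:M.

Lemma good_sym A r : A *m conjtr A = r%:M -> r != 0 -> good A r.
Proof.
move=> h r0; split=> //; split=> //.
have h1 : A *m (r^-1 *: conjtr A) = 1%:M.
  by rewrite -scalemxAr h scalZ mulVf.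
have := mulmx1C h1; rewrite -scalemxAl => /(congr1 (fun M => r *: M)).
by rewrite scalerA mulfV // scale1r scalemx1.
Qed.

Lemma psu_good M : is_psu M -> exists r, good M r.
Proof.
case=> c [U [c0 [[hU _] ->]]]; exists (c * Num.conj c).
apply: good_sym; last by rewrite mulf_neq0 ?conjC_eq0.
by rewrite conjtrZ -scalemxAl -scalemxAr hU scalerA scalemx1.
Qed.

Lemma goodM A B r s : good A r -> good B s -> good (A *m B) (r * s).
Proof.
move=> [r0 [h1 h2]] [s0 [h3 h4]]; apply: good_sym; last by rewrite mulf_neq0.
rewrite conjtrM mulmxA -(mulmxA A) h3 mul_mx_scalar -scalemxAl h1 scalZ.
by rewrite mulrC.
Qed.

Lemma good_conjtr A r : good A r -> good (conjtr A) r.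
Proof. by move=> [r0 [h1 h2]]; split => //; rewrite conjtrK. Qed.

Lemma good_unit A r : good A r -> A \in unitmx.
Proof.
move=> [r0 [h1 h2]]; have h : A *m (r^-1 *: conjtr A) = 1%:M.
  by rewrite -scalemxAr h1 scalZ mulVf.
by case: (mulmx1_unit h).
Qed.

Lemma good_inv A r : good A r -> invmx A = r^-1 *: conjtr A.
Proof.
move=> g; have [r0 [h1 h2]] := g.
have h : A *m (r^-1 *: conjtr A) = 1%:M.
  by rewrite -scalemxAr h1 scalZ mulVf.
by rewrite -[invmx A]mulmx1 -h mulmxA mulVmx ?mul1mx //; apply: good_unit g.
Qed.

Lemma goodZ A r c : good A r -> c != 0 -> good (c *: A) (c * Num.conj c * r).
Proof.
move=> [r0 [h1 h2]] c0; apply: good_sym; last by rewrite !mulf_neq0 ?conjC_eq0.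
by rewrite conjtrZ -scalemxAl -scalemxAr h1 scalerA scalZ.
Qed.

Definition e0 : pt R := fun i => (i == ord0)%:R.

Lemma good_wit A r : good A r ->
  lin (conjtr A) (lin A e0) = (fun i => r * e0 i) /\ exists i, lin A e0 i != 0.
Proof.
move=> [r0 [h1 h2]]; have E : lin (conjtr A) (lin A e0) = (fun i => r * e0 i).
  by rewrite linM h2 lin_scal.
split => //; apply/existsP; apply: contraT; rewrite negb_exists => /forallP h.
have : lin (conjtr A) (lin A e0) ord0 = 0.
  rewrite {1}/lin big1 // => j _; have := h j; rewrite negbK => /eqP ->.
  by rewrite mulr0.
by rewrite E /e0 eqxx mulr1 => /eqP; rewrite (negbTE r0).
Qed.

Lemma evKf A a x : ev (Krep A a) x = lin A (fa a (lin (conjtr A) x)).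
Proof. by apply: boolp.funext => i; rewrite evK. Qed.

Lemma compK A r b x i : good A r ->
  ev (Krep A (- b)) (ev (Krep A b) x) i
  = r ^+ 3 * (lin (conjtr A) x ord0) ^+ 3 * x i.
Proof.
move=> [r0 [h1 h2]]; set y := lin (conjtr A) x.
rewrite evK evKf linM h2 lin_scal faZ faK.
have -> : (fun i0 => r ^+ 2 * (y ord0 ^+ 3 * y i0)) = (fun i0 => (r ^+ 2 * y ord0 ^+ 3) * y i0).
  by apply: boolp.funext => j; rewrite mulrA.
rewrite linZv /y linM h1 lin_scal.
by rewrite exprS; ring.
Qed.

Lemma birK A r a : good A r -> birational (Krep A a).
Proof.
move=> g; have [E [j hj]] := good_wit g.
have Hx : forall b, ev (Krep A b) (lin A e0) = fun i => r ^+ 2 * lin A e0 i.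
  move=> b; rewrite evKf E faZ; apply: boolp.funext => i.
  have -> : fa b e0 = e0.
    by apply: boolp.funext => k; rewrite /fa /e0; case: (ord3P k) => [->|[->|->]]; rewrite /= ?expr2 ?mulr0 ?mulr1 ?addr0.
  by rewrite linZv.
have [r0 _] := g.
have nz : forall b, comp_is_id (Krep A (- b)) (Krep A b).
  move=> b; split.
    by move=> x i k; rewrite !(compK _ _ _ g); ring.
  exists (lin A e0); exists j; rewrite (compK _ _ _ g) E /e0 eqxx mulr1.
  by rewrite !mulf_neq0 ?expf_neq0.
split.
  apply: boolp.contrapT => h.
  have : ev (Krep A a) (lin A e0) j = 0.
    rewrite /ev /= evpolyE big1 // => m _.
    have : ~ (Ktrip A a j m != 0) by move=> hm; apply: h; exists j, m.
    by move/negP; rewrite negbK => /eqP ->; rewrite mul0r.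
  by rewrite Hx => /eqP; rewrite mulf_eq0 expf_eq0 (negbTE r0) (negbTE hj).
exists (Krep A (- a)); split; first exact: nz.
by have := nz (- a); rewrite opprK.
Qed.

Lemma same_map_prop (F G : BirRep R) (mu : C) :
  (forall x i, ev F x i = mu * ev G x i) -> same_map F G.
Proof. by move=> h x i j; rewrite !h; ring. Qed.

Lemma same_map_sym (F G : BirRep R) : same_map F G -> same_map G F.
Proof. by move=> h x i j; rewrite mulrC h mulrC. Qed.

Lemma same_map_refl (F : BirRep R) : same_map F F.
Proof. by move=> x i j; rewrite mulrC. Qed.

Lemma KrepZ A c a x i :
  ev (Krep (c *: A) a) x i = (c * Num.conj c ^+ 2) * ev (Krep A a) x i.
Proof.
by rewrite !evK conjtrZ !linZm faZ linZv mulrA.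
Qed.

Lemma K0 A r x i : good A r ->
  ev (Krep A 0) x i = r * lin (conjtr A) x ord0 * x i.
Proof.
move=> [r0 [h1 h2]]; rewrite evK.
have -> : fa 0 (lin (conjtr A) x) = fun k => lin (conjtr A) x ord0 * lin (conjtr A) x k.
  apply: boolp.funext => k; rewrite /fa.
  by case: (ord3P k) => [->|[->|->]]; rewrite /= ?mul0r ?addr0 ?expr2.
by rewrite linZv linM h1 lin_scal; ring.
Qed.

Lemma K0_same A B r s : good A r -> good B s -> same_map (Krep A 0) (Krep B 0).
Proof.
by move=> gA gB x i j; rewrite (K0 _ _ gA) (K0 _ _ gA) (K0 _ _ gB) (K0 _ _ gB); ring.
Qed.

Lemma good1 : good 1%:M 1.
Proof. by split; rewrite ?oner_eq0 // conjtr1 mul1mx. Qed.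

Lemma conjf_K M1 r1 Q r2 t : good M1 r1 -> good Q r2 ->
  exists mu : C, mu != 0 /\ forall x i,
    conjf (invmx M1 *m Q) t x i = mu * ev (Krep (conjtr M1 *m Q) (rc (t * (1 - t)))) x i.
Proof.
move=> g1 g2; set A := conjtr M1 *m Q.
have gA : good A (r1 * r2) by apply: goodM => //; apply: good_conjtr.
have [r10 _] := g1.
have r1i : r1^-1 != 0 by rewrite invr_eq0.
have EM : invmx M1 *m Q = r1^-1 *: A by rewrite (good_inv g1) -scalemxAl.
have gM := goodZ gA r1i.
set k := r1^-1 * Num.conj r1^-1 * (r1 * r2) in gM.
have [k0 _] := gM.
have EI : invmx (r1^-1 *: A) = (k^-1 * Num.conj r1^-1) *: conjtr A.
  by rewrite (good_inv gM) conjtrZ scalerA.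
exists (r1^-1 * (k^-1 * Num.conj r1^-1) ^+ 2); split.
  by rewrite !mulf_neq0 ?expf_neq0 ?mulf_neq0 ?invr_eq0 ?conjC_eq0.
move=> x i; rewrite /conjf EM EI !linZm fmapE faZ linZv evK mulrA.
by [].
Qed.
End Alg.

Section Cts.
Variable R : realType.
Local Notation C := (R[i]).
Local Notation rc := (real_complex R).

Definition cts (f : 'M[C]_3 -> R -> C) (Q0 : 'M[C]_3) (t0 : R) :=
  forall e : R, 0 < e -> exists d : R, 0 < d /\ forall (Q : 'M[C]_3) (t : R),
    (forall i j, nm (Q i j - Q0 i j) < d) -> `|t - t0| < d ->
    nm (f Q t - f Q0 t0) < e.

Variables (Q0 : 'M[C]_3) (t0 : R).

Lemma cts_const c : cts (fun _ _ => c) Q0 t0.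
Proof.
move=> e e0; exists 1; split => // Q t _ _.
by rewrite subrr -[nm 0]/(nm 0) (_ : nm 0 = 0) // ; apply/eqP; rewrite nm_eq0.
Qed.

Lemma cts_entry i j : cts (fun (Q : 'M[C]_3) _ => Q i j) Q0 t0.
Proof. by move=> e e0; exists e; split => // Q t h _; apply: h. Qed.

Lemma cts_t : cts (fun _ t => rc t) Q0 t0.
Proof.
move=> e e0; exists e; split => // Q t _ h.
by rewrite -rmorphB nm_rc.
Qed.

Lemma cts_conj f : cts f Q0 t0 -> cts (fun Q t => Num.conj (f Q t)) Q0 t0.
Proof.
move=> h e e0; have [d [d0 hd]] := h e e0; exists d; split => // Q t h1 h2.
by rewrite -rmorphB nmJ; apply: hd.
Qed.

Lemma cts_add f g : cts f Q0 t0 -> cts g Q0 t0 -> cts (fun Q t => f Q t + g Q t) Q0 t0.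
Proof.
move=> hf hg e e0.
have e2 : 0 < e / 2 by rewrite divr_gt0.
have [d1 [d10 h1]] := hf _ e2; have [d2 [d20 h2]] := hg _ e2.
exists (Num.min d1 d2); split; first by rewrite lt_min d10 d20.
move=> Q t hQ ht.
have hQ1 : forall i j, nm (Q i j - Q0 i j) < d1.
  by move=> i j; have := hQ i j; rewrite lt_min => /andP [].
have hQ2 : forall i j, nm (Q i j - Q0 i j) < d2.
  by move=> i j; have := hQ i j; rewrite lt_min => /andP [].
move: ht; rewrite lt_min => /andP [ht1 ht2].
have := h1 _ _ hQ1 ht1; have := h2 _ _ hQ2 ht2.
have -> : f Q t + g Q t - (f Q0 t0 + g Q0 t0) = (f Q t - f Q0 t0) + (g Q t - g Q0 t0).
  by rewrite opprD addrACA.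
move=> a b; apply: (le_lt_trans (nmD _ _)); lra.
Qed.

Lemma cts_opp f : cts f Q0 t0 -> cts (fun Q t => - f Q t) Q0 t0.
Proof.
move=> h e e0; have [d [d0 hd]] := h e e0; exists d; split => // Q t h1 h2.
by rewrite -opprD nmN; apply: hd.
Qed.

Lemma cts_mul f g : cts f Q0 t0 -> cts g Q0 t0 -> cts (fun Q t => f Q t * g Q t) Q0 t0.
Proof.
move=> hf hg e e0.
set a := nm (f Q0 t0); set b := nm (g Q0 t0).
have a0 : 0 <= a by apply: nm_ge0.
have b0 : 0 <= b by apply: nm_ge0.
have e1p : 0 < e / (2 * (b + 1)) by rewrite divr_gt0 // mulr_gt0 //; lra.
have e2p : 0 < Num.min 1 (e / (2 * (a + 1))).
  by rewrite lt_min ltr01 divr_gt0 // mulr_gt0 //; lra.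
have [d1 [d10 h1]] := hf _ e1p; have [d2 [d20 h2]] := hg _ e2p.
exists (Num.min d1 d2); split; first by rewrite lt_min d10 d20.
move=> Q t hQ ht.
have hQ1 : forall i j, nm (Q i j - Q0 i j) < d1.
  by move=> i j; have := hQ i j; rewrite lt_min => /andP [].
have hQ2 : forall i j, nm (Q i j - Q0 i j) < d2.
  by move=> i j; have := hQ i j; rewrite lt_min => /andP [].
move: ht; rewrite lt_min => /andP [ht1 ht2].
have := h1 _ _ hQ1 ht1; have := h2 _ _ hQ2 ht2.
rewrite lt_min => /andP [Y1 Y2] X.
rewrite ltr_pdivlMr in X; last by rewrite mulr_gt0 //; lra.
rewrite ltr_pdivlMr in Y2; last by rewrite mulr_gt0 //; lra.
have -> : f Q t * g Q t - f Q0 t0 * g Q0 t0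
  = (f Q t - f Q0 t0) * g Q t + f Q0 t0 * (g Q t - g Q0 t0) by ring.
apply: (le_lt_trans (nmD _ _)); rewrite !nmM -/a.
have G : nm (g Q t) <= b + nm (g Q t - g Q0 t0).
  by have := nmD (g Q0 t0) (g Q t - g Q0 t0); rewrite [g Q0 t0 + _]addrC subrK.
have := nm_ge0 (f Q t - f Q0 t0); have := nm_ge0 (g Q t - g Q0 t0).
have := nm_ge0 (g Q t).
move: X Y1 Y2 G; set X := nm (f Q t - f Q0 t0); set Y := nm (g Q t - g Q0 t0).
set Gv := nm (g Q t) => HX Y1 Y2 G Gp Yp Xp.
have h3 : X * Gv <= X * (b + 1) by apply: ler_wpM2l => //; lra.
nra.
Qed.

Lemma cts_sum (I : finType) (F : I -> 'M[C]_3 -> R -> C) :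
  (forall k, cts (F k) Q0 t0) -> cts (fun Q t => \sum_k F k Q t) Q0 t0.
Proof.
move=> h.
suff H : forall s : seq I, cts (fun Q t => \sum_(k <- s) F k Q t) Q0 t0.
  exact: (H (index_enum I)).
elim => [|k s IH].
  move=> e e0; exists 1; split => // Q t h1 h2.
  by rewrite !big_nil subrr (_ : nm 0 = 0) //; apply/eqP; rewrite nm_eq0.
move=> e e0; have [d [d0 hd]] := @cts_add _ _ (h k) IH e e0.
by exists d; split => // Q t h1 h2; rewrite !big_cons; apply: hd.
Qed.

Lemma cts_eq f g : (forall Q t, f Q t = g Q t) -> cts g Q0 t0 -> cts f Q0 t0.
Proof.
move=> E h e e0; have [d [d0 hd]] := h e e0; exists d; split => // Q t h1 h2.
by rewrite !E; apply: hd.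
Qed.

Variable M0 : 'M[C]_3.

Lemma cts_A i j : cts (fun Q _ => (M0 *m Q) i j) Q0 t0.
Proof.
apply: (cts_eq (g := fun Q _ => \sum_k M0 i k * Q k j)).
  by move=> Q t; rewrite mxE.
apply: cts_sum => k; apply: cts_mul; [exact: cts_const | exact: cts_entry].
Qed.

Lemma cts_B i j : cts (fun Q _ => conjtr (M0 *m Q) i j) Q0 t0.
Proof.
apply: (cts_eq (g := fun Q _ => Num.conj ((M0 *m Q) j i))).
  by move=> Q t; rewrite !mxE.
by apply: cts_conj; apply: cts_A.
Qed.

Lemma cts_qc (u w : 'M[C]_3 -> R -> 'I_3 -> C) m :
  (forall i, cts (fun Q t => u Q t i) Q0 t0) ->
  (forall i, cts (fun Q t => w Q t i) Q0 t0) ->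
  cts (fun Q t => qc (u Q t) (w Q t) m) Q0 t0.
Proof.
move=> hu hw; rewrite /qc; apply: cts_sum => i; apply: cts_sum => j.
case: (mono2 i j == m); last exact: cts_const.
exact: cts_mul.
Qed.

Lemma cts_a : cts (fun _ t => rc (t * (1 - t))) Q0 t0.
Proof.
apply: (cts_eq (g := fun _ t => rc t * (1 + - rc t))).
  by move=> Q t; rewrite rmorphM rmorphB rmorph1.
apply: cts_mul; first exact: cts_t.
apply: cts_add; first exact: cts_const.
apply: cts_opp; exact: cts_t.
Qed.

Lemma cts_K (p : 'I_3 * mon 2) :
  cts (fun Q t => coords (Ktrip (M0 *m Q) (rc (t * (1 - t)))) p) Q0 t0.
Proof.
rewrite /coords /Ktrip.
apply: cts_add.
  apply: cts_sum => k; apply: cts_mul; first exact: cts_A.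
  by apply: cts_qc => i; rewrite /rowf; apply: cts_B.
apply: cts_mul; last by apply: cts_qc => i; rewrite /rowf; apply: cts_B.
apply: cts_mul; [exact: cts_a | exact: cts_A].
Qed.

End Cts.

Section Topo.
Variable R : realType.
Lemma S_cont (m : R) : 0 < m -> forall e, 0 < e -> exists d, 0 < d /\
  forall t, `|t - m| < d -> `|sin t^-1 - sin m^-1| < e.
Proof.
move=> m0 e e0.
have hc : {for m, continuous (fun t : R => sin t^-1)}.
  apply: (@continuous_comp _ _ _ (fun t : R => t^-1) sin).
    by apply: inv_continuous; rewrite gt_eqF.
  exact: continuous_sin.
have H : \forall t \near nbhs m, `|sin m^-1 - sin t^-1| < e := (cvgrPdist_lt _ _).1 hc e e0.
have [d /= d0 hd] := (nbhs_ballP _ _).1 (H _); exists d; split => // t ht.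
rewrite distrC; apply: hd; rewrite /ball /= distrC; exact: ht.
Qed.

Lemma unif (K : set R) (P : R -> R -> Prop) : compact K ->
  (forall x, K x -> exists e, 0 < e /\ forall x' i, `|x' - x| < e -> `|i| < e -> P i x') ->
  exists e, 0 < e /\ forall i, `|i| < e -> forall x, K x -> P i x.
Proof.
move=> /compact_near_coveringP cK h.
have H : \forall i \near nbhs (0:R), (K `<=` P i)%classic.
  apply: (cK R (nbhs 0) P _) => x Kx.
  have [e [e0 he]] := h x Kx.
  exists (ball x e, ball 0 e) => /=.
    by split; apply: nbhsx_ballx.
  case=> x' i [/= h1 h2]; apply: he.
    by rewrite distrC; move: h1; rewrite /ball /=.
  by move: h2; rewrite /ball /= sub0r normrN.
have [e /= e0 he] := (nbhs_ballP _ _).1 H; exists e; split => // i hi x Kx.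
by apply: (he i) => //; rewrite /ball /= sub0r normrN.
Qed.

Lemma finite_min (I : finType) (P : I -> R -> Prop) :
  (forall i e e', 0 < e' -> e' <= e -> P i e -> P i e') ->
  (forall i, exists e, 0 < e /\ P i e) -> exists e, 0 < e /\ forall i, P i e.
Proof.
move=> mono h.
suff H : forall s : seq I, exists e, 0 < e /\ forall i, i \in s -> P i e.
  by have [e [e0 he]] := H (enum I); exists e; split => // i; apply: he; rewrite mem_enum.
elim => [|k s [e [e0 IH]]]; first by exists 1.
have [ek [ek0 hk]] := h k.
exists (Num.min e ek); split; first by rewrite lt_min e0 ek0.
move=> i; rewrite in_cons => /orP [/eqP ->|hi].
  by apply: (mono _ ek) => //; [rewrite lt_min e0 ek0 | rewrite ge_min lexx orbT].
by apply: (mono _ e) => //; [rewrite lt_min e0 ek0 | rewrite ge_min lexx | apply: IH].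
Qed.

Lemma cts_K_unif (M0 Q0 : 'M[R[i]]_3) (t0 e : R) : 0 < e -> exists d, 0 < d /\
  forall (Q : 'M[R[i]]_3) t, (forall i j, nm (Q i j - Q0 i j) < d) -> `|t - t0| < d ->
  forall p, nm (coords (Ktrip (M0 *m Q) (real_complex R (t * (1 - t)))) p
              - coords (Ktrip (M0 *m Q0) (real_complex R (t0 * (1 - t0)))) p) < e.
Proof.
move=> e0.
pose P := fun (p : 'I_3 * mon 2) d => forall (Q : 'M[R[i]]_3) t,
  (forall i j, nm (Q i j - Q0 i j) < d) -> `|t - t0| < d ->
  nm (coords (Ktrip (M0 *m Q) (real_complex R (t * (1 - t)))) p
      - coords (Ktrip (M0 *m Q0) (real_complex R (t0 * (1 - t0)))) p) < e.
have [d [d0 hd]] : exists d, 0 < d /\ forall p, P p d.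
  apply: finite_min.
    move=> p a a' a0 aa h Q t h1 h2; apply: h.
      by move=> i j; apply: lt_le_trans aa.
    exact: lt_le_trans aa.
  by move=> p; apply: (cts_K Q0 t0 M0 p e0).
by exists d; split => // Q t h1 h2 p; apply: hd.
Qed.
End Topo.

Section Main.
Variable R : realType.
Local Notation C := (R[i]).
Local Notation rc := (real_complex R).
Variable sigma : R -> 'M[C]_3.
Hypothesis Hs : psu_path sigma.

Definition M0 := conjtr (sigma (sin 1)).
Definition acoef (t : R) := rc (t * (1 - t)).
Definition G (y t : R) := Krep (M0 *m sigma y) (acoef t).

Lemma sin_in (x : R) : -1 <= sin x <= 1.
Proof. by rewrite -ler_norml sin_max. Qed.

Lemma lt0rc (r : R) : (0 < rc r) = (0 < r).
Proof. by rewrite -[0 : C](rmorph0 rc) ltcR. Qed.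

Lemma goodG y : -1 <= y <= 1 -> exists r, good (M0 *m sigma y) r.
Proof.
move=> hy; have [r1 g1] := psu_good (Hs.1 _ (sin_in 1)).
have [r2 g2] := psu_good (Hs.1 _ hy).
by exists (r1 * r2); apply: goodM => //; apply: good_conjtr.
Qed.

Lemma birG y t : -1 <= y <= 1 -> birational (G y t).
Proof. by move=> hy; have [r g] := goodG hy; apply: (birK _ g). Qed.

Lemma lemC U y t : bir_open U -> -1 <= y <= 1 -> U (G y t) ->
  exists e, 0 < e /\ forall y' t', -1 <= y' <= 1 -> `|y' - y| < e -> `|t' - t| < e ->
    U (G y' t').
Proof.
move=> [Usat Uch] hy HU.
have [O [vO hO]] := Uch 2%N.
have [r gA] := goodG hy.
have hOv : O (coords (Ktrip (M0 *m sigma y) (acoef t))).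
  exact: ((hO _ (birK _ gA)).1 HU).
have [ec [ec0 hec]] := vO _ hOv.
have [Eec e'0] := posC ec0.
have [d1 [d10 hd1]] := cts_K_unif M0 (sigma y) t e'0.
have [p0 hp0] : exists p0, mcoords (sigma y) p0 != 0.
  have [rs [rs0 [hs1 _]]] := psu_good (Hs.1 _ hy).
  apply: boolp.contrapT => hn.
  have Z : sigma y = 0.
    apply/matrixP => i j; rewrite mxE; apply/eqP; apply: contraT => h.
    by exfalso; apply: hn; exists (i, j).
  have := congr1 (fun M : 'M[C]_3 => M ord0 ord0) hs1; rewrite Z mul0mx !mxE eqxx mulr1n.
  by move=> /esym /eqP; rewrite (negbTE rs0).
have hn0 : 0 < nm (mcoords (sigma y) p0).
  by rewrite lt_neqAle eq_sym nm_eq0 hp0 nm_ge0.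
set hn := nm (mcoords (sigma y) p0) in hn0.
set d2 := Num.min d1 hn.
have d20 : 0 < d2 by rewrite lt_min d10 hn0.
pose S := fun v : 'I_3 * 'I_3 -> C => exists c : C, c != 0 /\
  forall p, nm (c * v p - mcoords (sigma y) p) < d2.
have pS : proj_open S.
  split; [|split].
  - move=> v [c [c0 hc]]; exists p0; apply/negP => /eqP v0.
    have := hc p0; rewrite v0 mulr0 sub0r nmN -/hn /d2 lt_min ltxx.
    by rewrite andbF.
  - move=> v c' c'0 [c [c0 hc]]; exists (c / c'); split.
      by rewrite mulf_neq0 ?invr_eq0.
    by move=> p; rewrite mulrA divfK //; apply: hc.
  - move=> v [c [c0 hc]].
    have [eta [eta0 heta]] : exists eta, 0 < eta /\ forall p,
        nm (c * v p - mcoords (sigma y) p) + eta < d2.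
      apply: finite_min.
        by move=> p a a' a0 aa h; apply: le_lt_trans h; rewrite lerD2l.
      move=> p; exists ((d2 - nm (c * v p - mcoords (sigma y) p)) / 2).
      by have := hc p; split; lra.
    have nc0 : 0 < nm c + 1 by have := nm_ge0 c; lra.
    exists (rc (eta / (nm c + 1))); split.
      by rewrite lt0rc divr_gt0.
    move=> w hw; exists c; split => // p.
    have := hw p; rewrite ltC => hwp.
    rewrite ltr_pdivlMr // in hwp.
    have -> : c * w p - mcoords (sigma y) p
      = c * (w p - v p) + (c * v p - mcoords (sigma y) p) by ring.
    apply: (le_lt_trans (nmD _ _)); rewrite nmM.
    have := heta p; have := nm_ge0 (w p - v p); have := nm_ge0 c.
    by nra.
have hS : S (mcoords (sigma y)).
  exists 1; split; first exact: oner_neq0.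
  move=> p; rewrite mul1r subrr.
  by rewrite (_ : nm 0 = 0) //; apply/eqP; rewrite nm_eq0.
have [e3 [e30 he3]] := Hs.2.1 S pS y hy hS.
exists (Num.min d1 e3); split; first by rewrite lt_min d10 e30.
move=> y' t' hy'; rewrite !lt_min => /andP [h1a h1b] /andP [h2a h2b].
have [c [c0 hc]] := he3 y' hy' h1b.
set Q' := c *: sigma y'.
have hQ : forall i j, nm (Q' i j - sigma y i j) < d1.
  move=> i j; rewrite mxE; have := hc (i, j); rewrite /mcoords /= => h.
  by apply: (lt_le_trans h); rewrite ge_min lexx.
have [r' gy'] := goodG hy'.
have gQ : good (M0 *m Q') (c * Num.conj c * r').
  by rewrite /Q' -scalemxAr; apply: goodZ.
have OQ : O (coords (Ktrip (M0 *m Q') (acoef t'))).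
  by apply: hec => p; rewrite Eec ltC; apply: (hd1 _ _ hQ h2a p).
have UQ : U (Krep (M0 *m Q') (acoef t')) by exact: ((hO _ (birK _ gQ)).2 OQ).
apply: (Usat _ _ (birK _ gQ) (birG _ hy') _ UQ).
apply: (same_map_prop (mu := c * Num.conj c ^+ 2)) => x i.
by rewrite /G /Q' -scalemxAr KrepZ.
Qed.

Lemma lemU U : bir_open U -> (forall y, -1 <= y <= 1 -> U (G y 0)) ->
  exists e, 0 < e /\ forall y t, -1 <= y <= 1 -> `|t| < e -> U (G y t).
Proof.
move=> hU H0.
have := @unif R `[-1, 1]%classic (fun t y => -1 <= y <= 1 -> U (G y t))
  (@segment_compact R (-1) 1).
case.
- move=> x; rewrite /= in_itv /= => hx.
  have [e [e0 he]] := lemC hU hx (H0 x hx).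
  exists e; split => // x' i h1 h2 hx'; apply: he => //.
  by rewrite subr0.
- move=> e [e0 he]; exists e; split => // y t hy ht.
  by apply: (he t ht y) => //=; rewrite in_itv /=.
Qed.

Definition Kid : BirRep R := Krep 1%:M 0.

Definition Hc (s t : R) : BirRep R :=
  if 0 < Num.max s t then G (sin (Num.max s t)^-1) t else Kid.

Lemma birKid : birational Kid.
Proof. exact: (birK 0 (@good1 R)). Qed.

Lemma birHc s t : birational (Hc s t).
Proof. by rewrite /Hc; case: ifP => _; [apply: birG; apply: sin_in | apply: birKid]. Qed.

Lemma G0_Kid y : -1 <= y <= 1 -> same_map (G y 0) Kid.
Proof.
move=> hy; have [r g] := goodG hy.
rewrite /G /acoef mul0r rmorph0.
exact: (K0_same g (@good1 R)).
Qed.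

Lemma absmax (s t s' t' e : R) : `|s' - s| < e -> `|t' - t| < e ->
  `|Num.max s' t' - Num.max s t| < e.
Proof.
rewrite !ltr_norml => /andP [a1 a2] /andP [b1 b2].
by case: (ltP s' t') => h1; case: (ltP s t) => h2; apply/andP; split; lra.
Qed.

Lemma contHc : bir_cont2 Hc.
Proof.
split; first by move=> s t _ _; apply: birHc.
move=> U hU s t hs ht HU.
have [hm|hm] := ltP 0 (Num.max s t).
- move: HU; rewrite /Hc hm => HU.
  have [e1 [e10 he1]] := lemC hU (sin_in _) HU.
  have [d [d0 hd]] := S_cont hm e10.
  exists (Num.min d (Num.min e1 (Num.max s t))); split.
    by rewrite !lt_min d0 e10 hm.
  move=> s' t' hs' ht'; rewrite !lt_min => /andP [h1 /andP [h2 h3]] /andP [k1 /andP [k2 k3]].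
  have hmm := absmax h3 k3.
  have hmm' := absmax h1 k1.
  have hm' : 0 < Num.max s' t'.
    by move: hmm; rewrite ltr_norml => /andP [u1 u2]; lra.
  rewrite /Hc hm'; apply: he1 => //; first exact: sin_in.
  exact: hd.
- move: hm; rewrite ge_max => /andP [hm1 hm2].
  have s0 : s = 0 by move: hs => /andP [? ?]; lra.
  have t0 : t = 0 by move: ht => /andP [? ?]; lra.
  subst s t.
  move: HU; rewrite /Hc maxxx ltxx => HU.
  have [Usat _] := hU.
  have H0 : forall y, -1 <= y <= 1 -> U (G y 0).
    move=> y hy; apply: (Usat _ _ birKid (birG _ hy) _ HU).
    by apply: same_map_sym; apply: G0_Kid.
  have [e [e0 he]] := lemU hU H0.
  exists e; split => // s' t' hs' ht' h1 h2.
  rewrite /Hc; case: ifP => _ //.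
  by apply: he; [apply: sin_in | rewrite -(subr0 t')].
Qed.

Lemma conjG s t : exists mu, mu != 0 /\ forall x i,
  conjf (sighat sigma s) t x i = mu * ev (G (sin s^-1) t) x i.
Proof.
have [r1 g1] := psu_good (Hs.1 _ (sin_in 1)).
have [r2 g2] := psu_good (Hs.1 _ (sin_in s^-1)).
exact: (conjf_K t g1 g2).
Qed.

End Main.

Theorem lemma5p2 (R : realType) (sigma : R -> 'M[R[i]]_3) :
  psu_path sigma ->
  exists rhohat : R -> BirRep R,
    bir_cont_on 0 1 rhohat /\
    (forall t, 0 < t <= 1 -> same_as (rhohat t) (conjf (sighat sigma t) t)) /\
    same_as (rhohat 0) id /\
    (forall H : R -> R -> BirRep R,
       (forall s t, 0 <= s <= 1 -> 0 <= t <= 1 ->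
          birational (H s t) /\
          (s <= t -> same_map (H s t) (rhohat t)) /\
          (t < s -> same_as (H s t) (conjf (sighat sigma s) t))) ->
       bir_cont2 H) /\
    (exists H : R -> R -> BirRep R,
       bir_cont2 H /\
       forall t, 0 <= t <= 1 ->
         same_map (H 0 t) (rhohat t) /\ same_as (H 1 t) (fmap t)).
Proof.
move=> Hs.
have C2 := contHc Hs.
have HcG : forall s t, 0 < s -> t <= s -> Hc sigma s t = G sigma (sin s^-1) t.
  by move=> s t s0 ts; rewrite /Hc max_l // s0.
have sameG : forall s t (F : BirRep R), 0 < s ->
    same_as F (conjf (sighat sigma s) t) -> same_map F (G sigma (sin s^-1) t).
  move=> s t F s0 hF x i j.
  have [mu [mu0 hmu]] := conjG Hs s t.
  have := hF x i j; rewrite !hmu => E.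
  apply: (mulfI mu0); rewrite mulrCA E; ring.
exists (fun t => Hc sigma 0 t); split; [|split; [|split; [|split]]].
- split; first by move=> t _; apply: birHc.
  move=> U hU t ht HU.
  have h00 : 0 <= (0:R) <= 1 by rewrite lexx ler01.
  have [e [e0 he]] := C2.2 U hU 0 t h00 ht HU.
  clear HU; exists e; split; first exact: e0.
  move=> t' ht' h.
  by apply: (he 0 t' h00 ht' _ h); rewrite subrr normr0; exact: e0.
- move=> t /andP [t0 t1].
  have [mu [mu0 hmu]] := conjG Hs t t.
  rewrite /Hc max_r ?ltW // t0 => x i j.
  by rewrite !hmu; ring.
- rewrite /Hc maxxx ltxx => x i j.
  rewrite /Kid !(K0 _ _ (@good1 R)); ring.
- move=> H hH; split; first by move=> s t hs ht; case: (hH s t hs ht).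
  have sameH : forall s t, 0 <= s <= 1 -> 0 <= t <= 1 -> same_map (H s t) (Hc sigma s t).
    move=> s t hs ht; have [_ [h1 h2]] := hH s t hs ht.
    case: (leP s t) => st.
      have -> : Hc sigma s t = Hc sigma 0 t.
        move: hs ht => /andP [s0 _] /andP [t0 _].
        by rewrite /Hc (max_r st) (max_r t0).
      exact: (h1 st).
    have s0 : 0 < s by move: ht => /andP [t0 _]; apply: le_lt_trans st.
    rewrite (HcG s t s0 (ltW st)).
    exact: (sameG s t _ s0 (h2 st)).
  move=> U hU s t hs ht HU.
  have [Usat _] := hU.
  have HUb : U (Hc sigma s t).
    apply: (Usat _ _ _ (birHc Hs _ _) (sameH _ _ hs ht) HU).
    by case: (hH s t hs ht).
  have [e [e0 he]] := C2.2 U hU s t hs ht HUb.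
  clear HU HUb; exists e; split; first exact: e0.
  move=> s' t' hs' ht' h1 h2.
  have B' : birational (H s' t') by case: (hH s' t' hs' ht').
  exact: (Usat _ _ (birHc Hs _ _) B' (same_map_sym (sameH _ _ hs' ht')) (he s' t' hs' ht' h1 h2)).
- exists (Hc sigma); split => // t /andP [t0 t1]; split.
    exact: same_map_refl.
  rewrite (HcG 1 t ltr01 t1).
  have [mu [mu0 hmu]] := conjG Hs 1 t.
  have E : forall x i, fmap t x i = mu * ev (G sigma (sin 1^-1) t) x i.
    move=> x i; rewrite -hmu /conjf /sighat invr1.
    have [r1 g1] := psu_good (Hs.1 _ (sin_in 1)).
    rewrite mulVmx; last exact: (good_unit g1).
    by rewrite invmx1 !lin1.
  by move=> x i j; rewrite !E; ring.
Qed.
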